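(* Let $E$ be a symmetric operator defined on a dense domain $\mathcal D$ of a Hilbert space $\mathcal H$ (real or complex). Let $d_1,d_2,\tilde d_1,\tilde d_2$ be real numbers with \[ \tilde d_1\le d_1,d_2\le\tilde d_2,\qquad\tilde d_1\ne\tilde d_2,\qquad\tilde d_1+\tilde d_2=d_1+d_2. \] If there is an orthonormal set $\{f_1,f_2\}\subset\mathcal D$ with $\langle Ef_i,f_i\rangle=\tilde d_i$ for $i=1,2$, then there exist $\alpha$ with \[ \frac{\tilde d_2-d_1}{\tilde d_2-\tilde d_1}\le\alpha\le1 \] and $\theta\in[0,2\pi)$ such that, setting \[ e_1=\sqrt\alpha\,f_1+\sqrt{1-\alpha}\,e^{i\theta}f_2,\qquad e_2=\sqrt{1-\alpha}\,f_1-\sqrt\alpha\,e^{i\theta}f_2, \] we have $\langle Ee_i,e_i\rangle=d_i$ for $i=1,2$. Moreover, if $\mathcal H$ is a real Hilbert space then $e^{i\theta}=\pm1$, and if the inequalities $\tilde d_1\le d_1,d_2\le\tilde d_2$ are all strict, then $\alpha<1$.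
   Context: $E$ symmetric means $\langle Ef,g\rangle=\langle f,Eg\rangle$ for all $f,g\in\mathcal D$. *)

(* Defs.v *)
From HB Require Import structures.
From mathcomp Require Import all_boot all_order all_algebra.
From mathcomp Require Import all_classical all_reals all_analysis.
From mathcomp Require Import complex.
Set Implicit Arguments. Unset Strict Implicit. Unset Printing Implicit Defensive.
Import Order.TTheory GRing.Theory Num.Theory.
Import numFieldNormedType.Exports.
Local Open Scope classical_set_scope.
Local Open Scope ring_scope.

(** [ip] is an inner product on the normed space [H] over the scalar field [K]
    (with conjugation [cj]: identity for real, complex conjugation for complex
    scalars), linear in the first argument, conjugate symmetric, and inducing
    the norm of [H]: |x|^2 = <x,x>.  Positive definiteness follows from the
    norm axioms.  Together with [H : completeNormedModType K] this makes [H]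
    a Hilbert space. *)
Definition is_inner_product (K : numFieldType) (cj : K -> K)
    (H : normedModType K) (ip : H -> H -> K) : Prop :=
  [/\ forall (a : K) (x y z : H), ip (a *: x + y) z = a * ip x z + ip y z,
      forall x y : H, ip y x = cj (ip x y) &
      forall x : H, `|x| ^+ 2 = ip x x].

Definition is_subspace (K : numFieldType) (H : normedModType K) (D : set H) :=
  D 0 /\ forall (a : K) (x y : H), D x -> D y -> D (a *: x + y).

Definition dense_in (K : numFieldType) (H : normedModType K) (D : set H) :=
  closure D = [set: H].

Definition is_operator_on (K : numFieldType) (H : normedModType K)
    (D : set H) (E : H -> H) :=
  forall (a : K) (x y : H), D x -> D y -> E (a *: x + y) = a *: E x + E y.

Definition symmetric_on (K : numFieldType) (H : normedModType K)
    (ip : H -> H -> K) (D : set H) (E : H -> H) :=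
  forall f g, D f -> D g -> ip (E f) g = ip f (E g).

Definition orthonormal2 (K : numFieldType) (H : normedModType K)
    (ip : H -> H -> K) (f1 f2 : H) :=
  [/\ ip f1 f1 = 1, ip f2 f2 = 1 & ip f1 f2 = 0].

(* Main.v *)
Require Import Defs.
From HB Require Import structures.
From mathcomp Require Import all_boot all_order all_algebra.
From mathcomp Require Import all_classical all_reals all_analysis.
From mathcomp Require Import complex.
Import Order.TTheory GRing.Theory Num.Theory.
Import numFieldNormedType.Exports.
Local Open Scope classical_set_scope.
Local Open Scope ring_scope.

From mathcomp Require Import ring lra.
Lemma core_ivt (R : realType) (dt1 dt2 d1 k : R) :
  dt1 <= d1 <= dt2 -> 0 <= k ->
  exists2 a : R, 0 <= a <= 1 &
    a * dt1 + (1 - a) * dt2 + Num.sqrt a * Num.sqrt (1 - a) * k = d1.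
Proof.
move=> /andP[h1 h2] k0.
pose f := fun x : R => x * dt1 + (1 - x) * dt2 + Num.sqrt x * Num.sqrt (1 - x) * k.
have fc : continuous f.
  move=> x; rewrite /f.
  apply: cvgD; first apply: cvgD.
  - by apply: cvgMl; apply: cvg_id.
  - by apply: cvgMl; apply: cvgB; [exact: cvg_cst|exact: cvg_id].
  - apply: cvgMl; apply: cvgM; first exact: sqrt_continuous.
    have := @continuous_comp _ _ _ (fun x : R => 1 - x) (@Num.sqrt R) x.
    apply; last exact: sqrt_continuous.
    by apply: cvgB; [exact: cvg_cst|exact: cvg_id].
have [c cI fcv] : exists2 c, c \in `[0, 1] & f c = d1.
  apply: IVT; first by [].
  - by apply: continuous_subspaceT.
  - rewrite /f !subr0 subrr !sqrtr0 sqrtr1 !(mul0r, mulr0, mul1r, addr0, add0r).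
    rewrite ge_min le_max; apply/andP; split; apply/orP; [right|left] => //.
by exists c => //; move: cI; rewrite in_itv.
Qed.
Section Exp.
Variables (K : numFieldType) (cj : K -> K) (H : normedModType K) (ip : H -> H -> K).
Hypothesis hip : is_inner_product cj ip.
Hypothesis cjD : forall x y, cj (x + y) = cj x + cj y.
Hypothesis cjM : forall x y, cj (x * y) = cj x * cj y.

Lemma ip0l z : ip 0 z = 0.
Proof.
case: hip => l _ _; have := l 1 0 0 z; rewrite scale1r addr0 mul1r.
by move/(congr1 (fun v => v - ip 0 z)); rewrite subrr addrK => <-.
Qed.

Lemma ipDl x y z : ip (x + y) z = ip x z + ip y z.
Proof. by case: hip => l _ _; have := l 1 x y z; rewrite scale1r mul1r. Qed.

Lemma ipZl a x z : ip (a *: x) z = a * ip x z.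
Proof. by case: hip => l _ _; have := l a x 0 z; rewrite addr0 ip0l addr0. Qed.

Lemma ipDr x y z : ip z (x + y) = ip z x + ip z y.
Proof. by case: hip => _ s _; rewrite s ipDl cjD -!s. Qed.

Lemma ipZr a x z : ip z (a *: x) = cj a * ip z x.
Proof. by case: hip => _ s _; rewrite s ipZl cjM -!s. Qed.

Lemma expand2 (D : set H) (E : H -> H) f1 f2 a b :
  is_subspace D -> is_operator_on D E -> D f1 -> D f2 ->
  ip (E (a *: f1 + b *: f2)) (a *: f1 + b *: f2) =
    a * cj a * ip (E f1) f1 + a * cj b * ip (E f1) f2
    + (b * cj a * ip (E f2) f1 + b * cj b * ip (E f2) f2).
Proof.
move=> [D0 DS] hE D1 D2.
have E0 : E 0 = 0.
  have := hE 1 0 0 D0 D0; rewrite !scale1r addr0.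
  by move/(congr1 (fun v => v - E 0)); rewrite subrr addrK => <-.
have Db : D (b *: f2) by rewrite -[b *: f2]addr0; apply: DS.
have Eb : E (b *: f2) = b *: E f2 by rewrite -[b *: f2]addr0 hE // E0 addr0.
rewrite hE // Eb !ipDl !ipDr !ipZl !ipZr.
by rewrite !mulrA.
Qed.
End Exp.
Lemma alg (R : comRingType) (al sa sb s dt1 dt2 w12 w21 c d1 d2 : R) :
  sa * sa = al -> sb * sb = 1 - al -> s * s = 1 -> w12 + w21 = c ->
  al * dt1 + (1 - al) * dt2 + sa * sb * (s * c) = d1 -> dt1 + dt2 = d1 + d2 ->
  sa * sa * dt1 + sa * (sb * s) * w12
    + (sb * s * sa * w21 + sb * s * (sb * s) * dt2) = d1 /\
  sb * sb * dt1 + sb * (- (sa * s)) * w12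
    + (- (sa * s) * sb * w21 + - (sa * s) * (- (sa * s)) * dt2) = d2.
Proof.
move=> h1 h2 h3 hc h4 h5.
have e : forall x y, x * s * (y * s) = x * y.
  by move=> x y; rewrite mulrACA h3 mulr1.
rewrite mulrNN !e mulNr !mulrN mulNr.
have -> : d2 = dt1 + dt2 - d1 by rewrite h5 addrAC subrr add0r.
subst al c d1; rewrite !h2; split; ring.
Qed.
Theorem lemma2p7 (R : realType) :
  (* real Hilbert space *)
  (forall (H : completeNormedModType R) (ip : H -> H -> R) (D : set H)
          (E : H -> H) (d1 d2 dt1 dt2 : R) (f1 f2 : H),
    is_inner_product id ip -> is_subspace D -> dense_in D ->
    is_operator_on D E -> symmetric_on ip D E ->
    dt1 <= d1 <= dt2 -> dt1 <= d2 <= dt2 -> dt1 != dt2 -> dt1 + dt2 = d1 + d2 ->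
    D f1 -> D f2 -> orthonormal2 ip f1 f2 ->
    ip (E f1) f1 = dt1 -> ip (E f2) f2 = dt2 ->
    exists alpha : R,
      [/\ (dt2 - d1) / (dt2 - dt1) <= alpha <= 1 ,
          exists s : R, (s = 1 \/ s = -1) /\
            (let e1 := Num.sqrt alpha *: f1 + (Num.sqrt (1 - alpha) * s) *: f2 in
             let e2 := Num.sqrt (1 - alpha) *: f1 - (Num.sqrt alpha * s) *: f2 in
             ip (E e1) e1 = d1 /\ ip (E e2) e2 = d2) &
          (dt1 < d1 < dt2 -> dt1 < d2 < dt2 -> alpha < 1)])
  /\
  (* complex Hilbert space *)
  (forall (H : completeNormedModType R[i]) (ip : H -> H -> R[i]) (D : set H)
          (E : H -> H) (d1 d2 dt1 dt2 : R) (f1 f2 : H),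
    is_inner_product (@conjc R) ip -> is_subspace D -> dense_in D ->
    is_operator_on D E -> symmetric_on ip D E ->
    dt1 <= d1 <= dt2 -> dt1 <= d2 <= dt2 -> dt1 != dt2 -> dt1 + dt2 = d1 + d2 ->
    D f1 -> D f2 -> orthonormal2 ip f1 f2 ->
    ip (E f1) f1 = dt1%:C%C -> ip (E f2) f2 = dt2%:C%C ->
    exists alpha : R,
      [/\ (dt2 - d1) / (dt2 - dt1) <= alpha <= 1 ,
          exists theta : R, 0 <= theta < 2 * pi /\
            (let u : R[i] := (cos theta +i* sin theta)%C in
             let e1 := (Num.sqrt alpha)%:C%C *: f1
                       + ((Num.sqrt (1 - alpha))%:C%C * u) *: f2 in
             let e2 := (Num.sqrt (1 - alpha))%:C%C *: f1
                       - ((Num.sqrt alpha)%:C%C * u) *: f2 in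
             ip (E e1) e1 = d1%:C%C /\ ip (E e2) e2 = d2%:C%C) &
          (dt1 < d1 < dt2 -> dt1 < d2 < dt2 -> alpha < 1)]).
Proof.
split.
- move=> H ip D E d1 d2 dt1 dt2 f1 f2 hip hD _ hE hS /andP[l1 u1] /andP[l2 u2]
    hne hsum D1 D2 [nn1 nn2 nn3] e1 e2.
  have lt12 : dt1 < dt2 by rewrite lt_neqAle hne (le_trans l1 u1).
  set c := ip (E f1) f2 + ip (E f2) f1.
  pose s : R := if 0 <= c then 1 else -1.
  have ss : s * s = 1 by rewrite /s; case: ifP => _; rewrite ?mulrNN mulr1.
  have k0 : 0 <= s * c.
    rewrite /s; case: ifP => h; first by rewrite mul1r.
    by rewrite mulN1r oppr_ge0 ltW // ltNge h.
  have [al /andP[a0 a1] fcv] := @core_ivt R dt1 dt2 d1 (s*c)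
    (introT andP (conj l1 u1)) k0.
  exists al; split.
  + rewrite a1 andbT ler_pdivrMr ?subr_gt0 //.
    have P : 0 <= Num.sqrt al * Num.sqrt (1 - al) * (s * c).
      by rewrite mulr_ge0 // mulr_ge0 // sqrtr_ge0.
    move: fcv P; rewrite mulrBl mul1r mulrBr; lra.
  + exists s; split; first by rewrite /s; case: ifP; auto.
    have cjD : forall x y : R, id (x + y) = id x + id y by [].
    have cjM : forall x y : R, id (x * y) = id x * id y by [].
    rewrite /= -scaleNr !(@expand2 _ _ _ _ hip cjD cjM _ _ _ _ _ _ hD hE D1 D2) /= e1 e2.
    apply: (@alg _ al _ _ _ _ _ _ _ c) => //.
    * by rewrite -expr2 sqr_sqrtr.
    * by rewrite -expr2 sqr_sqrtr // subr_ge0.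
  + move=> /andP[s1 _] _; rewrite lt_neqAle a1 andbT; apply/eqP => ha.
    move: fcv; rewrite ha subrr sqrtr0 !(mul0r, mulr0, addr0, mul1r) => ha'.
    by move: s1; rewrite ha' ltxx.
- move=> H ip D E d1 d2 dt1 dt2 f1 f2 hip hD _ hE hS /andP[l1 u1] /andP[l2 u2]
    hne hsum D1 D2 [nn1 nn2 nn3] e1 e2.
  have lt12 : dt1 < dt2 by rewrite lt_neqAle hne (le_trans l1 u1).
  have w21E : ip (E f2) f1 = conjc (ip (E f1) f2).
    by case: hip => _ sy _; rewrite hS // sy.
  set c : R := complex.Re (ip (E f1) f2) * 2.
  have cE : ip (E f1) f2 + ip (E f2) f1 = c%:C%C.
    rewrite w21E /c rmorphM /= ReJ_add rmorph_nat mulfVK //.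
  pose s : R := if 0 <= c then 1 else -1.
  have ss : s * s = 1 by rewrite /s; case: ifP => _; rewrite ?mulrNN mulr1.
  have k0 : 0 <= s * c.
    rewrite /s; case: ifP => h; first by rewrite mul1r.
    by rewrite mulN1r oppr_ge0 ltW // ltNge h.
  have [al /andP[a0 a1] fcv] := @core_ivt R dt1 dt2 d1 (s*c)
    (introT andP (conj l1 u1)) k0.
  exists al; split.
  + rewrite a1 andbT ler_pdivrMr ?subr_gt0 //.
    have P : 0 <= Num.sqrt al * Num.sqrt (1 - al) * (s * c).
      by rewrite mulr_ge0 // mulr_ge0 // sqrtr_ge0.
    move: fcv P; rewrite mulrBl mul1r mulrBr; lra.
  + exists (if 0 <= c then 0 else pi); split.
      have p0 := pi_gt0 R.
      by case: ifP => _; apply/andP; split; lra.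
    have uE : (cos (if 0 <= c then 0 else pi) +i* sin (if 0 <= c then 0 else pi))%C
        = s%:C%C.
      by rewrite /s; case: ifP => _; rewrite ?cos0 ?sin0 ?cospi ?sinpi.
    rewrite /= uE.
    have cjD : forall x y : R[i], conjc (x + y) = conjc x + conjc y
      by move=> x y; rewrite rmorphD.
    have cjM : forall x y : R[i], conjc (x * y) = conjc x * conjc y
      by move=> x y; rewrite rmorphM.
    rewrite -scaleNr !(@expand2 _ _ _ _ hip cjD cjM _ _ _ _ _ _ hD hE D1 D2) e1 e2.
    have cr : forall x : R, conjc (x%:C%C) = x%:C%C by move=> x; exact: conjc_real.
    have cjN : forall x : R[i], conjc (- x) = - conjc x by move=> x; rewrite raddfN.
    rewrite !cjN !cjM !cr.
    apply: (@alg _ al%:C%C _ _ _ _ _ _ _ c%:C%C) => //.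
    * by rewrite -rmorphM -expr2 sqr_sqrtr.
    * by rewrite -rmorphM -expr2 sqr_sqrtr ?subr_ge0 // rmorphB rmorph1.
    * by rewrite -rmorphM ss rmorph1.
    * by rewrite -fcv !rmorphD !rmorphM rmorphB rmorph1.
    * by rewrite -rmorphD hsum rmorphD.
  + move=> /andP[s1 _] _; rewrite lt_neqAle a1 andbT; apply/eqP => ha.
    move: fcv; rewrite ha subrr sqrtr0 !(mul0r, mulr0, addr0, mul1r) => ha'.
    by move: s1; rewrite ha' ltxx.
Qed.
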